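(* Let $m \equiv 3 \pmod 4$ with $m > 3$, $n = 3^m - 1$, $v = (3^{(m-1)/2}-1)/2$ and $\delta = (3^{(m-1)/2}+11)/2$. Then $\gcd(v,n) = 1$, and, setting $T_{(1,2,m)}(v) = \{ vi \bmod n : i \in T_{(1,2,m)}\}$, we have $\{1, 2, \ldots, \delta-1\} \subseteq T_{(1,2,m)}(v)$.
   Context: For an integer $0 \le j \le n-1$ with $3$-adic expansion $j = \sum_{t=0}^{m-1} j_t 3^t$, $j_t \in \{0,1,2\}$, let $w_3(j) = \sum_{t=0}^{m-1} j_t$. For distinct $i_1,i_2 \in \{0,1,2,3\}$, $T_{(i_1,i_2,m)} = \{1 \le j \le n-1 : w_3(j) \equiv i_1 \text{ or } i_2 \pmod 4\}$. For an integer $b$, $b \bmod n$ is the unique $b_0 \in \{0,\ldots,n-1\}$ with $b \equiv b_0 \pmod n$. *)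

(* Defs.v *)
From mathcomp Require Import all_boot.
Set Implicit Arguments. Unset Strict Implicit. Unset Printing Implicit Defensive.

Definition w3 (m j : nat) : nat := \sum_(t < m) ((j %/ 3 ^ t) %% 3).

Definition T_set (i1 i2 m : nat) : pred nat :=
  fun j => [&& 1 <= j, j <= 3 ^ m - 2 &
               ((w3 m j %% 4 == i1) || (w3 m j %% 4 == i2))].

Definition T_scaled (i1 i2 m v : nat) : pred nat :=
  fun k => [exists i : 'I_(3 ^ m), T_set i1 i2 m i && (k == (v * i) %% (3 ^ m - 1))].

(* Main.v *)
Require Import Defs.
From mathcomp Require Import all_boot all_algebra zify ring.
Lemma w3_split s t a b : b < 3^s -> w3 (s+t) (a*3^s + b) = w3 s b + w3 t a.
Proof.
move=> hb; rewrite /w3 big_split_ord; congr (_ + _).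
  apply: eq_bigr => i _ /=.
  move: (ltn_ord i); move: (nat_of_ord i) => j hi.
  have e : 3^s = 3^(s - j.+1) * 3 * 3^j by rewrite -expnSr -expnD; congr (_ ^ _); lia.
  by rewrite e !mulnA divnMDl ?expn_gt0 // modnMDl.
apply: eq_bigr => i _ /=.
rewrite expnD divnMA divnMDl ?expn_gt0 // (divn_small hb) addn0 //.
Qed.
Lemma w3_0 t : w3 t 0 = 0.
Proof. by rewrite /w3 big1 // => i _; rewrite div0n mod0n. Qed.
Lemma w3_1 c : w3 1 c = c %% 3.
Proof. by rewrite /w3 big_ord_recr big_ord0 /= expn0 divn1. Qed.
Lemma w3_S t x : w3 t.+1 x = x %% 3 + w3 t (x %/ 3).
Proof.
have := w3_split 1 t (x %/ 3) (x %% 3). rewrite add1n expn1 -divn_eq w3_1 modn_mod.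
by apply; rewrite ltn_pmod.
Qed.
Lemma w3_odd t x : x < 3^ t -> odd (w3 t x) = odd x.
Proof.
elim: t x => [|t IH] x hx.
  by rewrite /w3 big_ord0; move: hx; rewrite expn0; case: x.
rewrite w3_S oddD IH; last by rewrite ltn_divLR // -expnSr.
rewrite {3}(divn_eq x 3) oddD oddM andbT; apply: addbC.
Qed.
Lemma w3_comp t x : x < 3^ t -> w3 t (3^ t - 1 - x) + w3 t x = 2 * t.
Proof.
elim: t x => [|t IH] x hx.
  by rewrite /w3 !big_ord0.
have hq : x %/ 3 < 3^ t by rewrite ltn_divLR // -expnSr.
have e : 3^ t.+1 - 1 - x = (3^ t - 1 - x %/ 3) * 3 + (2 - x %% 3).
  rewrite expnS {1}(divn_eq x 3).
  have := ltn_pmod x (isT : 0 < 3). lia.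
rewrite w3_S e modnMDl divnMDl // (divn_small (_ : 2 - x %% 3 < 3)); last lia.
rewrite addn0 (modn_small (_ : 2 - x %% 3 < 3)); last lia.
have := IH _ hq. have := ltn_pmod x (isT : 0 < 3). rewrite w3_S. lia.
Qed.
Lemma w3_small j t c : c < 3^j -> j <= t -> w3 t c = w3 j c.
Proof.
move=> hc hj; rewrite -(subnKC hj).
by have := w3_split j (t - j) 0 c hc; rewrite mul0n add0n w3_0 addn0.
Qed.
Lemma key m s v k z q : m = 4*s+3 -> 1 <= z -> z < 3^m - 1 -> w3 m z %% 4 <= 1 ->
  v*z + q*(3^m-1) + k = v*(3^m-1) -> k < 3^m - 1 -> T_scaled 1 2 m v k.
Proof.
move=> hm hz1 hz2 hw he hk.
have hi : 3^m - 1 - z < 3^m by lia.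
apply/existsP; exists (Ordinal hi); rewrite /T_set /=.
have he2 : v * (3^m - 1 - z) = q * (3^m - 1) + k.
  by rewrite mulnBr -he -addnA addKn.
rewrite he2 modnMDl (modn_small hk) eqxx andbT.
have hz3 : z < 3^m by lia.
have hc := @w3_comp m z hz3.
apply/and3P; split; [lia|lia|].
move: hc hw; rewrite hm. lia.
Qed.
Lemma shape h a c : a < 3^h -> c < 3 -> ~~ odd a ->
  w3 (h.+1 + h) (a*3^h.+1 + (a*3+c)) %% 4 = c.
Proof.
move=> ha hc hodd.
rewrite w3_split; last by rewrite expnSr; lia.
have := w3_split 1 h a c; rewrite add1n expn1 => ->; last by [].
rewrite w3_1 (modn_small hc).
have := @w3_odd h a ha; rewrite (negbTE hodd).
lia.
Qed.
Lemma arE q j : let v := q + j in v*(2*j*(6*v+3) + (2*j*3+0)) + q*(12*v*v+12*v+2) + 2*j = v*(12*v*v+12*v+2).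
Proof. rewrite /=. ring. Qed.
Lemma arO q k : let v := 2*q + k in v*(2*(q+k)*(6*v+3) + (2*(q+k)*3+1)) + q*(12*v*v+12*v+2) + k = v*(12*v*v+12*v+2).
Proof. rewrite /=. ring. Qed.
Lemma arS1 p : let v := p + 1 in v*(2*(6*v+3) + 5) + p*(12*v*v+12*v+2) + (v+2) = v*(12*v*v+12*v+2).
Proof. rewrite /=. ring. Qed.
Lemma arS2 p : let v := p + 2 in v*(4*(6*v+3) + 11) + p*(12*v*v+12*v+2) + (v+4) = v*(12*v*v+12*v+2).
Proof. rewrite /=. ring. Qed.
Theorem lemma4 (m : nat) :
  m %% 4 = 3 -> 3 < m ->
  let n := 3 ^ m - 1 in
  let v := (3 ^ ((m - 1) %/ 2) - 1) %/ 2 in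
  let delta := (3 ^ ((m - 1) %/ 2) + 11) %/ 2 in
  coprime v n /\
  (forall k, 1 <= k <= delta - 1 -> T_scaled 1 2 m v k).
Proof.
move=> hm4 hm3; rewrite /=.
set h := (m - 1) %/ 2. set N := 3 ^ h. set v := (N - 1) %/ 2.
set delta := (N + 11) %/ 2.
have hs : m = 4 * (m %/ 4) + 3 by lia.
have hmh : m = h.+1 + h by rewrite /h; lia.
have hh3 : 3 <= h by rewrite /h; lia.
have hN4 : N %% 4 = 3.
  rewrite /N (_ : h = 2 * (h %/ 2) + 1); last by rewrite /h; lia.
  by rewrite expnD expnM -modnMml -modnXm (_ : 3^2 %% 4 = 1) // exp1n.
have hN27 : 27 <= N by rewrite /N (_ : 27 = 3^3) // leq_exp2l.
have hNv : N = 2 * v + 1 by rewrite /v; lia.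
have hvodd : odd v by move: hN4; rewrite hNv; lia.
have hv13 : 13 <= v by lia.
have h3h : 3 ^ h.+1 = 6 * v + 3 by rewrite expnS -/N hNv; lia.
have hn : 3 ^ m - 1 = 12 * v * v + 12 * v + 2.
  rewrite hmh expnD h3h -/N hNv. nia.
have hd : delta - 1 = v + 5 by rewrite /delta hNv; lia.
split.
  rewrite /coprime hn (_ : 12 * v * v + 12 * v + 2 = (12 * v + 12) * v + 2); last by nia.
  by rewrite gcdnMDl -/(coprime v 2) coprimen2.
move=> k /andP[hk1]; rewrite hd => hk2.
case: (boolP (odd k)) => ko.
  case: (leqP k v) => hkv.
    apply: (@key m (m %/ 4) v k ((v+k)*3^h.+1 + ((v+k)*3+1)) (v - (v+k) %/ 2)).
    - lia.
    - lia.
    - rewrite hn h3h. nia.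
    - rewrite {1}hmh shape //; last by rewrite oddD ko hvodd.
      rewrite -/N hNv; lia.
    - rewrite hn h3h.
      set q := v - (v+k) %/ 2.
      have hv : v = 2 * q + k by rewrite /q; lia.
      have ha : v + k = 2 * (q + k) by rewrite /q; lia.
      rewrite ha; move: (arO q k) => /=; rewrite -hv; done.
    - rewrite hn; lia.
  have [->|->] : k = v + 2 \/ k = v + 4 by lia.
    apply: (@key m (m %/ 4) v (v+2) (2*3^h.+1 + 5) (v - 1)).
    - lia.
    - lia.
    - rewrite hn h3h. nia.
    - rewrite {1}hmh w3_split; last by rewrite h3h; lia.
      rewrite (@w3_small 2 h.+1 5) // ?(@w3_small 1 h 2) //; try lia.
      by rewrite /w3 !big_ord_recr !big_ord0.
    - rewrite hn h3h.
      set p := v - 1. have hv : v = p + 1 by rewrite /p; lia.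
      move: (arS1 p) => /=; rewrite -hv; done.
    - rewrite hn; lia.
  apply: (@key m (m %/ 4) v (v+4) (4*3^h.+1 + 11) (v - 2)).
  - lia.
  - lia.
  - rewrite hn h3h. nia.
  - rewrite {1}hmh w3_split; last by rewrite h3h; lia.
    rewrite (@w3_small 3 h.+1 11) // ?(@w3_small 2 h 4) //; try lia.
    by rewrite /w3 !big_ord_recr !big_ord0.
  - rewrite hn h3h.
    set p := v - 2. have hv : v = p + 2 by rewrite /p; lia.
    move: (arS2 p) => /=; rewrite -hv; done.
  - rewrite hn; lia.
apply: (@key m (m %/ 4) v k (k*3^h.+1 + (k*3+0)) (v - k %/ 2)).
- lia.
- rewrite h3h; lia.
- rewrite hn h3h. nia.
- rewrite {1}hmh shape //; last by rewrite /N; lia.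
- rewrite hn h3h.
  set j := k %/ 2. set q := v - j.
  have hk : k = 2 * j by rewrite /j; lia.
  have hv : v = q + j by rewrite /q /j; lia.
  rewrite hk; move: (arE q j) => /=; rewrite -hv; done.
- rewrite hn; lia.
Qed.
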